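(* Let $\mathbb{K}$ be a field of characteristic $2$, let $(A,\cdot,\{-,-\},(-)^{\{2\}})$ be a restricted Poisson algebra, and let $n\ge0$. For every $(\varphi,\omega)\in C^n_{\rm PA}(A)$ we have $\mathrm{d}^n_{\rm PA}(\varphi,\omega)\in C^{n+1}_{\rm PA}(A)$; consequently $\big(\bigoplus_{n\ge0}C^n_{\rm PA}(A),\mathrm{d}^n_{\rm PA}\big)$ is a cochain complex.
   Context: $\mathbb{K}$ has characteristic $2$. Restricted Poisson algebra: commutative associative (not necessarily unital) $(A,\cdot)$ with Lie bracket $\{-,-\}$ satisfying $\{ab,c\}=a\{b,c\}+b\{a,c\}$, and a map $(-)^{\{2\}}$ such that $(\lambda x)^{\{2\}}=\lambda^2x^{\{2\}}$, $\mathrm{ad}_{x^{\{2\}}}=\mathrm{ad}_x^2$, $(x+y)^{\{2\}}=x^{\{2\}}+y^{\{2\}}+\{x,y\}$, and $(xy)^{\{2\}}=x^2y^{\{2\}}+y^2x^{\{2\}}+xy\{x,y\}$. $\mathfrak{X}^k(A)$: alternating $k$-linear maps $A^k\to A$ that are derivations of $\cdot$ in each argument. $C^0_{\rm PA}(A)=A$, $C^1_{\rm PA}(A)=\mathfrak{X}^1(A)$; for $n\ge2$, $C^n_{\rm PA}(A)$ consists of pairs $(\varphi,\omega)$ with $\varphi\in\mathfrak{X}^n(A)$ and $\omega:A\times A^{n-2}\to A$ alternating and multilinear in its last $n-2$ arguments, such that (with $z=(z_2,\dots,z_{n-1})$): $\omega(\lambda x,z)=\lambda^2\omega(x,z)$;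 $\omega(x+y,z)=\omega(x,z)+\omega(y,z)+\varphi(x,y,z)$; $\omega(xy,z)=x^2\omega(y,z)+y^2\omega(x,z)+xy\varphi(x,y,z)$; $\omega(x,z_2,..,z_iz_i',..,z_{n-1})=z_i\omega(x,..,z_i',..)+z_i'\omega(x,..,z_i,..)$. Differentials (with $x\cdot m=\{x,m\}$): $\mathrm{d}^0(a)(x)=\{x,a\}$; $\mathrm{d}^1\psi=(\mathrm{d}_{\rm CE}\psi,\delta^1\psi)$, $\delta^1\psi(x)=\psi(x^{\{2\}})+\{x,\psi(x)\}$; $\mathrm{d}^n(\varphi,\omega)=(\mathrm{d}_{\rm CE}\varphi,\delta^n\omega)$ where $\mathrm{d}_{\rm CE}\varphi(x_1,..,x_{n+1})=\sum_{i<j}\varphi(\{x_i,x_j\},x_1,..,\hat x_i,..,\hat x_j,..,x_{n+1})+\sum_i\{x_i,\varphi(x_1,..,\hat x_i,..,x_{n+1})\}$ and $\delta^n\omega(x,z_2,..,z_n)=\{x,\varphi(x,z_2,..,z_n)\}+\sum_{i=2}^n\{z_i,\omega(x,z_2,..,\hat z_i,..,z_n)\}+\varphi(x^{\{2\}},z_2,..,z_n)+\sum_{i=2}^n\varphi(\{x,z_i\},x,z_2,..,\hat z_i,..,z_n)+\sum_{2\le i<j\le n}\omega(x,\{z_i,z_j\},z_2,..,\hat z_i,..,\hat z_j,..,z_n)$. *)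

(* Defs.v *)
From HB Require Import structures.
From mathcomp Require Import all_boot all_order all_algebra.
Set Implicit Arguments. Unset Strict Implicit. Unset Printing Implicit Defensive.
Import Order.TTheory GRing.Theory Num.Theory.
Local Open Scope ring_scope.

Section RPA.
Variables (K : fieldType) (V : lmodType K).
Variables (mul br : V -> V -> V) (sq : V -> V).

Definition is_comm_assoc_alg : Prop :=
  [/\ (forall a x y z, mul (a *: x + y) z = a *: mul x z + mul y z),
      (forall x y, mul x y = mul y x) &
      (forall x y z, mul x (mul y z) = mul (mul x y) z)].

Definition is_lie : Prop :=
  [/\ (forall a x y z, br (a *: x + y) z = a *: br x z + br y z),
      (forall a x y z, br z (a *: x + y) = a *: br z x + br z y),
      (forall x, br x x = 0) &
      (forall x y z, br x (br y z) + br y (br z x) + br z (br x y) = 0)].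

Definition is_leibniz : Prop :=
  forall a b c, br (mul a b) c = mul a (br b c) + mul b (br a c).

Definition is_restriction : Prop :=
  [/\ (forall (a : K) x, sq (a *: x) = a ^+ 2 *: sq x),
      (forall x y, br (sq x) y = br x (br x y)),
      (forall x y, sq (x + y) = sq x + sq y + br x y) &
      (forall x y, sq (mul x y) =
         mul (mul x x) (sq y) + mul (mul y y) (sq x) + mul (mul x y) (br x y))].

Definition is_rpa : Prop :=
  [/\ is_comm_assoc_alg, is_lie, is_leibniz & is_restriction].

(* Maps on argument lists; only lists of the relevant length matter. *)
Definition multilin (k : nat) (f : seq V -> V) : Prop :=
  forall (s : seq V) i (a : K) u v, size s = k -> (i < k)%N ->
    f (set_nth 0 s i (a *: u + v)) = a *: f (set_nth 0 s i u) + f (set_nth 0 s i v).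

Definition alternating (k : nat) (f : seq V -> V) : Prop :=
  forall (s : seq V) i j, size s = k -> (i < j)%N -> (j < k)%N ->
    nth 0 s i = nth 0 s j -> f s = 0.

Definition derivation_args (k : nat) (f : seq V -> V) : Prop :=
  forall (s : seq V) i u v, size s = k -> (i < k)%N ->
    f (set_nth 0 s i (mul u v)) =
      mul u (f (set_nth 0 s i v)) + mul v (f (set_nth 0 s i u)).

Definition isX (k : nat) (f : seq V -> V) : Prop :=
  [/\ multilin k f, alternating k f & derivation_args k f].

(* A cochain: phi (on lists of length n) and omega (x, z) with z of length n-2.
   For n = 0 the element of A is phi [::]; for n <= 1 omega is irrelevant. *)
Definition cochain := ((seq V -> V) * (V -> seq V -> V))%type.

Definition inC (n : nat) (c : cochain) : Prop :=
  let: (phi, om) := c in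
  isX n phi /\
  ((2 <= n)%N ->
   [/\ (forall (a : K) x z, size z = (n - 2)%N -> om (a *: x) z = a ^+ 2 *: om x z),
       (forall x y z, size z = (n - 2)%N -> om (x + y) z = om x z + om y z + phi [:: x, y & z]),
       (forall x y z, size z = (n - 2)%N ->
          om (mul x y) z = mul (mul x x) (om y z) + mul (mul y y) (om x z)
                           + mul (mul x y) (phi [:: x, y & z])) &
       (forall x, isX (n - 2) (om x))]).

Definition del (i : nat) (s : seq V) : seq V := take i s ++ drop i.+1 s.
Definition del2 (i j : nat) (s : seq V) : seq V := del i (del j s).

Definition dCE (phi : seq V -> V) (xs : seq V) : V :=
  \sum_(j < size xs) \sum_(i < j) phi (br (nth 0 xs i) (nth 0 xs j) :: del2 i j xs)
  + \sum_(i < size xs) br (nth 0 xs i) (phi (del i xs)).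

Definition delta (phi : seq V -> V) (om : V -> seq V -> V) (x : V) (zs : seq V) : V :=
  br x (phi (x :: zs))
  + \sum_(i < size zs) br (nth 0 zs i) (om x (del i zs))
  + phi (sq x :: zs)
  + \sum_(i < size zs) phi (br x (nth 0 zs i) :: x :: del i zs)
  + \sum_(j < size zs) \sum_(i < j) om x (br (nth 0 zs i) (nth 0 zs j) :: del2 i j zs).

(* d^n_PA(phi, omega) = (d_CE phi, delta^n omega); for n = 0, 1 this
   specializes to the given d^0, d^1. *)
Definition dPA (c : cochain) : cochain :=
  let: (phi, om) := c in (dCE phi, delta phi om).

Definition cochain_zero (n : nat) (c : cochain) : Prop :=
  let: (phi, om) := c in
  (forall s, size s = n -> phi s = 0) /\
  ((2 <= n)%N -> forall x z, size z = (n - 2)%N -> om x z = 0).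

End RPA.

(* Main.v *)
Require Import Defs.
From HB Require Import structures.
From mathcomp Require Import all_boot all_order all_algebra.
From mathcomp Require Import zify.
Set Implicit Arguments. Unset Strict Implicit. Unset Printing Implicit Defensive.
Import GRing.Theory.
Local Open Scope ring_scope.

Section Main.
Variables (K : fieldType) (V : lmodType K).
Variables (mul br : V -> V -> V) (sq : V -> V).
Hypothesis char2 : (2%:R : K) = 0.
Hypothesis mulDl : forall a x y z, mul (a *: x + y) z = a *: mul x z + mul y z.
Hypothesis mulC : forall x y, mul x y = mul y x.
Hypothesis mulA : forall x y z, mul x (mul y z) = mul (mul x y) z.
Hypothesis brDl : forall a x y z, br (a *: x + y) z = a *: br x z + br y z.
Hypothesis brDr : forall a x y z, br z (a *: x + y) = a *: br z x + br z y.
Hypothesis brxx : forall x, br x x = 0.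
Hypothesis jac : forall x y z, br x (br y z) + br y (br z x) + br z (br x y) = 0.
Hypothesis leib : forall a b c, br (mul a b) c = mul a (br b c) + mul b (br a c).
Hypothesis sqZ : forall (a : K) x, sq (a *: x) = a ^+ 2 *: sq x.
Hypothesis sqbr : forall x y, br (sq x) y = br x (br x y).
Hypothesis sqD : forall x y, sq (x + y) = sq x + sq y + br x y.
Hypothesis sqM : forall x y, sq (mul x y) =
         mul (mul x x) (sq y) + mul (mul y y) (sq x) + mul (mul x y) (br x y).

Lemma addvv (v : V) : v + v = 0.
Proof. by rewrite -mulr2n -scaler_nat char2 scale0r. Qed.

Lemma c2eq (a b : V) : a + b = 0 -> a = b.
Proof. by move=> h; rewrite -[b]add0r -h -addrA addvv addr0. Qed.

Lemma eqc2 (a b : V) : a = b -> a + b = 0.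
Proof. by move=> ->; rewrite addvv. Qed.

Definition sumL (l : seq V) : V := foldr (fun a b => a + b) 0 l.

Inductive tr := Lf of V | Nd of tr & tr | Zr.
Fixpoint ev (t : tr) : V :=
  match t with Lf a => a | Nd t1 t2 => ev t1 + ev t2 | Zr => 0 end.
Fixpoint fl (t : tr) : seq V :=
  match t with Lf a => [:: a] | Nd t1 t2 => fl t1 ++ fl t2 | Zr => [::] end.

Lemma sumL_cat l1 l2 : sumL (l1 ++ l2) = sumL l1 + sumL l2.
Proof. by elim: l1 => [|a l IH] /=; rewrite ?add0r // IH addrA. Qed.

Lemma evE t : ev t = sumL (fl t).
Proof. by elim: t => [a|t1 IH1 t2 IH2|] /=; rewrite ?addr0 // sumL_cat IH1 IH2. Qed.

Fixpoint rmn (n : nat) (l : seq V) : seq V :=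
  match l, n with
  | b :: l', 0 => l'
  | b :: l', S n' => b :: rmn n' l'
  | [::], _ => [::]
  end.

Lemma sumL_rmn n l : (n < size l)%N -> sumL l = nth 0 l n + sumL (rmn n l).
Proof.
elim: l n => [|b l IH] [|n] //= h.
by rewrite (IH n h) addrCA.
Qed.

Lemma cancel_at n a l : (n < size l)%N -> a = nth 0 l n -> sumL (a :: l) = sumL (rmn n l).
Proof.
move=> h ->; rewrite /= (sumL_rmn h) addrA addvv add0r //.
Qed.

Ltac reify e :=
  lazymatch e with
  | ?a + ?b => let ta := reify a in let tb := reify b in constr:(Nd ta tb)
  | 0 => constr:(Zr)
  | _ => constr:(Lf e)
  end.

Ltac cancel_go :=
  lazymatch goal with
  | |- sumL [::] = 0 => reflexivity
  | |- sumL (?a :: ?l) = 0 => try_idx a l 0%N l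
  end
with try_idx a l n l' :=
  lazymatch l' with
  | ?b :: ?q =>
      first [ unify a b; rewrite (@cancel_at n a l) //; cbn [rmn]; cancel_go
            | try_idx a l (S n) q ]
  | _ => fail 100 "unmatched" a
  end.

Ltac c2 :=
  apply: c2eq;
  lazymatch goal with
  | |- ?e = 0 => let t := reify e in
      change e with (ev t); rewrite evE; cbn [fl cat]; cancel_go
  end.


Lemma brD x y z : br (x + y) z = br x z + br y z.
Proof. by have := brDl 1 x y z; rewrite !scale1r. Qed.
Lemma brDr' x y z : br z (x + y) = br z x + br z y.
Proof. by have := brDr 1 x y z; rewrite !scale1r. Qed.
Lemma br0l z : br 0 z = 0.
Proof. by have := brD 0 0 z; rewrite addr0 addvv => ->. Qed.
Lemma br0r z : br z 0 = 0.
Proof. by have := brDr' 0 0 z; rewrite addr0 addvv => ->. Qed.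
Lemma brZl a x z : br (a *: x) z = a *: br x z.
Proof. by rewrite -[a *: x]addr0 brDl br0l addr0. Qed.
Lemma brZr a x z : br z (a *: x) = a *: br z x.
Proof. by rewrite -[a *: x]addr0 brDr br0r addr0. Qed.
Lemma brC x y : br x y = br y x.
Proof.
apply: c2eq; have := brxx (x + y).
by rewrite brD !brDr' !brxx add0r addr0.
Qed.
Lemma jac2 a b z : br a (br b z) = br b (br a z) + br (br a b) z.
Proof.
apply: c2eq; have := jac a b z.
by rewrite [br z a]brC [br z (br a b)]brC addrA.
Qed.
Lemma mulD x y z : mul (x + y) z = mul x z + mul y z.
Proof. by have := mulDl 1 x y z; rewrite !scale1r. Qed.
Lemma mul0l z : mul 0 z = 0.
Proof. by have := mulD 0 0 z; rewrite addr0 addvv => ->. Qed.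
Lemma mulZl a x z : mul (a *: x) z = a *: mul x z.
Proof. by rewrite -[a *: x]addr0 mulDl mul0l addr0. Qed.
Lemma mulDr x y z : mul z (x + y) = mul z x + mul z y.
Proof. by rewrite mulC mulD ![mul _ z]mulC. Qed.
Lemma mul0r z : mul z 0 = 0.
Proof. by rewrite mulC mul0l. Qed.
Lemma mulZr a x z : mul z (a *: x) = a *: mul z x.
Proof. by rewrite mulC mulZl mulC. Qed.
Lemma leib2 a b c : br c (mul a b) = mul a (br c b) + mul b (br c a).
Proof. by rewrite brC leib ![br _ c]brC. Qed.
Lemma br_xx_mul b x : br b (mul x x) = 0.
Proof. by rewrite leib2 addvv. Qed.

Lemma add_sum (I : Type) (r : seq I) (h : V -> V) (F : I -> V) :
  h 0 = 0 -> (forall x y, h (x + y) = h x + h y) ->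
  h (\sum_(i <- r) F i) = \sum_(i <- r) h (F i).
Proof.
move=> h0 hD; elim: r => [|x r IH]; first by rewrite !big_nil.
by rewrite !big_cons hD IH.
Qed.

Lemma br_sumr (I : Type) (r : seq I) a (F : I -> V) :
  br a (\sum_(i <- r) F i) = \sum_(i <- r) br a (F i).
Proof. by apply: (@add_sum _ r (br a) F) => // [|x y]; [exact: br0r | exact: brDr']. Qed.
Lemma mul_sumr (I : Type) (r : seq I) a (F : I -> V) :
  mul a (\sum_(i <- r) F i) = \sum_(i <- r) mul a (F i).
Proof. by apply: (@add_sum _ r (mul a) F) => // [|x y]; [exact: mul0r | exact: mulDr]. Qed.
Lemma sum_vv (I : Type) (r : seq I) (F : I -> V) :
  \sum_(i <- r) (F i + F i) = 0.
Proof. by rewrite big1 // => i _; rewrite addvv. Qed.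

Fixpoint picks (s : seq V) : seq (V * seq V) :=
  if s is a :: s' then (a, s') :: [seq (p.1, a :: p.2) | p <- picks s'] else [::].
Fixpoint picks2 (s : seq V) : seq (V * V * seq V) :=
  if s is a :: s' then
    [seq (a, p.1, p.2) | p <- picks s'] ++ [seq (q.1.1, q.1.2, a :: q.2) | q <- picks2 s']
  else [::].

Lemma sP_cons a s (F : V -> seq V -> V) :
  \sum_(p <- picks (a :: s)) F p.1 p.2 = F a s + \sum_(p <- picks s) F p.1 (a :: p.2).
Proof. by rewrite /= big_cons big_map. Qed.

Lemma sP2_cons a s (G : V -> V -> seq V -> V) :
  \sum_(q <- picks2 (a :: s)) G q.1.1 q.1.2 q.2 =
  \sum_(p <- picks s) G a p.1 p.2 + \sum_(q <- picks2 s) G q.1.1 q.1.2 (a :: q.2).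
Proof. by rewrite /= big_cat !big_map. Qed.

Lemma del0 (a : V) s : del 0 (a :: s) = s.
Proof. by rewrite /del /= drop0. Qed.
Lemma delS i (a : V) s : del i.+1 (a :: s) = a :: del i s.
Proof. by rewrite /del. Qed.

Lemma S1 s (G : V -> seq V -> V) :
  \sum_(i < size s) G (nth 0 s i) (del i s) = \sum_(p <- picks s) G p.1 p.2.
Proof.
elim: s G => [|a s IH] G; first by rewrite big_ord0 big_nil.
rewrite sP_cons /= big_ord_recl /= del0 -(IH (fun b r => G b (a :: r))); congr (_ + _).
Qed.

Lemma S2 s (G : V -> V -> seq V -> V) :
  \sum_(j < size s) \sum_(i < j) G (nth 0 s i) (nth 0 s j) (del2 i j s) =
  \sum_(q <- picks2 s) G q.1.1 q.1.2 q.2.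
Proof.
elim: s G => [|a s IH] G; first by rewrite big_ord0 big_nil.
rewrite sP2_cons /= big_ord_recl big_ord0 add0r -(IH (fun b c r => G b c (a :: r))).
rewrite -(S1 s (G a)) -big_split /=.
apply: eq_bigr => j _; rewrite big_ord_recl /=; congr (_ + _).
by rewrite /del2 /bump /= add0n delS del0.
Qed.

Definition ins (a : V) (f : seq V -> V) : seq V -> V := fun s => f (a :: s).
Definition sym (f : seq V -> V) := forall s t, perm_eq s t -> f s = f t.
Definition adj (f : seq V -> V) :=
  forall p x y q, f (p ++ x :: y :: q) = f (p ++ y :: x :: q).

Lemma move_front p : forall f, adj f -> forall a q, f (p ++ a :: q) = f (a :: p ++ q).
Proof.
elim: p => [|b p IH] f hf a q //=.
have hb : adj (ins b f) by move=> p' x y q'; exact: (hf (b :: p')).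
have := IH _ hb a q; rewrite /ins => ->.
exact: (hf [::] b a).
Qed.

Lemma perm_mid (t1 t2 : seq V) a : perm_eq (t1 ++ a :: t2) (a :: t1 ++ t2).
Proof. by apply/permPl; exact: (perm_catCA t1 [:: a] t2). Qed.

Lemma adj_sym f : adj f -> sym f.
Proof.
move=> hf s; elim: s f hf => [|a s IH] f hf t hst.
  by move/perm_size: hst; case: t.
have ht : a \in t by rewrite -(perm_mem hst) mem_head.
move: hst; case/splitPr: ht => t1 t2 hst.
rewrite (move_front t1 hf).
have hb : adj (ins a f) by move=> p' x y q'; exact: (hf (a :: p')).
apply: (IH (ins a f) hb).
by rewrite -(perm_cons a); apply: perm_trans hst _; exact: perm_mid.
Qed.

Lemma PSself j (s : seq V) : (j < size s)%N -> perm_eq s (nth 0 s j :: del j s).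
Proof.
move=> hj; rewrite /del.
have {1}-> : s = take j s ++ nth 0 s j :: drop j.+1 s by rewrite -drop_nth // cat_take_drop.
exact: perm_mid.
Qed.

Lemma PS i (s : seq V) w : (i < size s)%N -> perm_eq (set_nth 0 s i w) (w :: del i s).
Proof. by move=> hi; rewrite set_nthE hi /del; exact: perm_mid. Qed.

Lemma nth_del i j (s : seq V) : (i < j)%N -> (j < size s)%N -> nth 0 (del j s) i = nth 0 s i.
Proof.
move=> hij hj; rewrite /del nth_cat size_take hj hij nth_take //.
Qed.

Lemma size_del i (s : seq V) : (i < size s)%N -> size (del i s) = (size s).-1.
Proof.
move=> hi; rewrite /del size_cat size_take hi size_drop.
by move: hi; case: (size s) => // n; rewrite ltnS => h; rewrite subSS subnKC.
Qed.

Definition hlin (f : seq V -> V) := forall a x y r, f ((a *: x + y) :: r) = a *: f (x :: r) + f (y :: r).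
Definition hder (f : seq V -> V) := forall u v r, f (mul u v :: r) = mul u (f (v :: r)) + mul v (f (u :: r)).
Definition halt (f : seq V -> V) := forall a r, f (a :: a :: r) = 0.
Record Xg (f : seq V -> V) : Prop := XG { Xsym : sym f; Xlin : hlin f; Xder : hder f; Xalt : halt f }.

Definition restr (k : nat) (f : seq V -> V) : seq V -> V := fun s => if size s == k then f s else 0.

Lemma set_nth_mid (p : seq V) a r w : set_nth 0 (p ++ a :: r) (size p) w = p ++ w :: r.
Proof. by elim: p => //= b p ->. Qed.
Lemma set_nth_mid1 (p : seq V) a b r w : set_nth 0 (p ++ a :: b :: r) (size p).+1 w = p ++ a :: w :: r.
Proof. by elim: p => //= c p ->. Qed.

Lemma isX_adj k f : isX mul k f -> adj (restr k f).
Proof.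
case=> hml hal _ p x y q; rewrite /restr !size_cat /=.
case: eqP => // hs.
pose g u v := f (p ++ u :: v :: q).
have szp : forall u v, size (p ++ u :: v :: q) = k by move=> u v; rewrite size_cat.
have hi : (size p < k)%N by rewrite -hs; lia.
have hi1 : ((size p).+1 < k)%N by rewrite -hs; lia.
have gl : forall u1 u2 v, g (u1 + u2) v = g u1 v + g u2 v.
  move=> u1 u2 v; have := hml (p ++ x :: v :: q) (size p) 1 u1 u2 (szp _ _) hi.
  by rewrite !set_nth_mid !scale1r /g.
have gr : forall u v1 v2, g u (v1 + v2) = g u v1 + g u v2.
  move=> u v1 v2; have := hml (p ++ u :: x :: q) (size p).+1 1 v1 v2 (szp _ _) hi1.
  by rewrite !set_nth_mid1 !scale1r /g.
have ga : forall u, g u u = 0.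
  move=> u; apply: (hal _ (size p) (size p).+1 (szp _ _)) => //.
  by rewrite !nth_cat ltnn subnn /= ltnNge leqnSn /= subSn // subnn.
apply: c2eq; have := ga (x + y).
by rewrite gl !gr !ga add0r addr0.
Qed.

Lemma isX_Xg k f : isX mul k f -> Xg (restr k f).
Proof.
move=> hX; have [hml hal hde] := hX; split.
- exact: adj_sym (isX_adj hX).
- move=> a x y r; rewrite /restr /=; case: eqP => hs; last by rewrite scaler0 addr0.
  by have := hml (x :: r) 0 a x y hs; rewrite -hs /=; apply.
- move=> u v r; rewrite /restr /=; case: eqP => hs; last by rewrite !mul0r addr0.
  by have := hde (u :: r) 0 u v hs; rewrite -hs /=; apply.
- move=> a r; rewrite /restr /=; case: eqP => hs //.
  by apply: (hal (a :: a :: r) 0 1 hs) => //; rewrite -hs.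
Qed.

Lemma Xg_isX k f : Xg f -> isX mul k f.
Proof.
case=> hs hl hd ha; split.
- move=> s i a u v hsz hi; rewrite -hsz in hi.
  by rewrite !(hs _ _ (PS _ hi)) hl.
- move=> s i j hsz hij hj heq; rewrite -hsz in hj.
  rewrite (hs _ _ (PSself hj)).
  have hi' : (i < size (del j s))%N.
    by rewrite size_del // -ltnS (ltn_predK hj); apply: leq_trans hj.
  rewrite (hs _ (nth 0 s j :: nth 0 (del j s) i :: del i (del j s))); last by rewrite perm_cons; exact: PSself.
  by rewrite nth_del // heq ha.
- move=> s i u v hsz hi; rewrite -hsz in hi.
  by rewrite !(hs _ _ (PS _ hi)) hd.
Qed.

Definition dC (f : seq V -> V) : seq V -> V := fun s =>
  \sum_(q <- picks2 s) f (br q.1.1 q.1.2 :: q.2) + \sum_(p <- picks s) br p.1 (f p.2).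
Definition L (a : V) (f : seq V -> V) : seq V -> V := fun s =>
  br a (f s) + \sum_(p <- picks s) f (br a p.1 :: p.2).
Definition mu (u : V) (f : seq V -> V) : seq V -> V := fun s => mul u (f s).
Definition fadd (f g : seq V -> V) : seq V -> V := fun s => f s + g s.
Definition fsc (a : K) (f : seq V -> V) : seq V -> V := fun s => a *: f s.
Definition f0 : seq V -> V := fun _ => 0.

Lemma dC_eq f g : f =1 g -> dC f =1 dC g.
Proof.
move=> h s; rewrite /dC; congr (_ + _); apply: eq_bigr => q _; by rewrite h.
Qed.
Lemma L_eq a f g : f =1 g -> L a f =1 L a g.
Proof.
move=> h s; rewrite /L h; congr (_ + _); apply: eq_bigr => q _; by rewrite h.
Qed.
Lemma dC_add f g s : dC (fadd f g) s = dC f s + dC g s.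
Proof.
rewrite /dC /fadd !big_split /=.
have -> : \sum_(p <- picks s) br p.1 (f p.2 + g p.2) =
   \sum_(p <- picks s) br p.1 (f p.2) + \sum_(p <- picks s) br p.1 (g p.2).
  by rewrite -big_split; apply: eq_bigr => p _; exact: brDr'.
c2.
Qed.
Lemma dC_sc a f s : dC (fsc a f) s = a *: dC f s.
Proof.
rewrite /dC /fsc scalerDr !scaler_sumr; congr (_ + _).
by apply: eq_bigr => q _; rewrite brZr.
Qed.
Lemma dC0 : dC f0 =1 f0.
Proof.
move=> s; rewrite /dC /f0 big1 ?add0r ?big1 // => q _; exact: br0r.
Qed.
Lemma L_add a f g s : L a (fadd f g) s = L a f s + L a g s.
Proof.
rewrite /L /fadd brDr' big_split /=; c2.
Qed.
Lemma L_sc a c f s : L a (fsc c f) s = c *: L a f s.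
Proof.
rewrite /L /fsc scalerDr brZr scaler_sumr //.
Qed.
Lemma L0 a : L a f0 =1 f0.
Proof. by move=> s; rewrite /L /f0 br0r add0r big1. Qed.
Lemma L_lina (c : K) x y f s : hlin f ->
  L (c *: x + y) f s = c *: L x f s + L y f s.
Proof.
move=> hl; rewrite /L /fadd /fsc brDl scalerDr scaler_sumr.
under eq_bigr do rewrite brDl hl.
rewrite big_split /=; c2.
Qed.
Lemma ins_lin (c : K) x y f : hlin f ->
  ins (c *: x + y) f =1 fadd (fsc c (ins x f)) (ins y f).
Proof. by move=> hl s; rewrite /ins /fadd /fsc hl. Qed.

Lemma cartan a f : sym f -> ins a (dC f) =1 fadd (dC (ins a f)) (L a f).
Proof.
move=> hs s; rewrite /ins /fadd /dC /L (sP2_cons a s (fun b c r => f (br b c :: r))).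
rewrite (sP_cons a s (fun b r => br b (f r))) /=.
have -> : \sum_(q <- picks2 s) f (br q.1.1 q.1.2 :: a :: q.2) =
          \sum_(q <- picks2 s) f (a :: br q.1.1 q.1.2 :: q.2).
  by apply: eq_bigr => q _; apply: hs; rewrite (perm_catCA [:: _] [:: _]).
c2.
Qed.

Lemma L_cons a b f s : sym f -> L a f (b :: s) = L a (ins b f) s + f (br a b :: s).
Proof.
move=> hs; rewrite /L /ins (sP_cons b s (fun c r => f (br a c :: r))) /=.
have -> : \sum_(p <- picks s) f (br a p.1 :: b :: p.2) =
          \sum_(p <- picks s) f (b :: br a p.1 :: p.2).
  by apply: eq_bigr => q _; apply: hs; rewrite (perm_catCA [:: _] [:: _]).
c2.
Qed.

Lemma swap2 (x y : V) r : perm_eq (x :: y :: r) (y :: x :: r).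
Proof. by rewrite (perm_catCA [:: x] [:: y]). Qed.

Lemma sumP_adj p : forall (F : V -> seq V -> V), (forall b, sym (F b)) ->
  forall x y q, \sum_(p0 <- picks (p ++ x :: y :: q)) F p0.1 p0.2 =
                \sum_(p0 <- picks (p ++ y :: x :: q)) F p0.1 p0.2.
Proof.
elim: p => [|c p IH] F hF x y q.
  rewrite !cat0s (sP_cons x (y :: q) F) (sP_cons y q (fun b r => F b (x :: r))) /=.
  rewrite (sP_cons y (x :: q) F) (sP_cons x q (fun b r => F b (y :: r))) /=.
  have -> : \sum_(p0 <- picks q) F p0.1 [:: x, y & p0.2] =
            \sum_(p0 <- picks q) F p0.1 [:: y, x & p0.2].
    by apply: eq_bigr => p0 _; apply: hF; exact: swap2.
  c2.
rewrite !cat_cons (sP_cons c _ F) (sP_cons c (p ++ y :: x :: q) F); congr (_ + _).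
  by apply: hF; rewrite perm_cat2l; exact: swap2.
apply: (IH (fun b r => F b (c :: r))) => b s t hst; apply: hF; by rewrite perm_cons.
Qed.

Lemma sumP_sym (F : V -> seq V -> V) : (forall b, sym (F b)) ->
  sym (fun s => \sum_(p0 <- picks s) F p0.1 p0.2).
Proof. by move=> hF; apply: adj_sym => p x y q; exact: sumP_adj. Qed.

Lemma ins_sym a f : sym f -> sym (ins a f).
Proof. by move=> hs s t hst; apply: hs; rewrite perm_cons. Qed.

Lemma L_sym a f : sym f -> sym (L a f).
Proof.
move=> hs s t hst; rewrite /L (hs _ _ hst); congr (_ + _).
apply: (sumP_sym (F := fun b r => f (br a b :: r))) => // b.
exact: ins_sym.
Qed.

Lemma dC_adj p : forall f, sym f -> forall x y q, dC f (p ++ x :: y :: q) = dC f (p ++ y :: x :: q).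
Proof.
elim: p => [|c p IH] f hs x y q /=.
  have hx := ins_sym x hs; have hy := ins_sym y hs.
  rewrite -!/(ins x (dC f) _) -!/(ins y (dC f) _) !cartan // /fadd.
  rewrite -/(ins y (dC (ins x f)) q) -/(ins x (dC (ins y f)) q) !cartan // /fadd.
  rewrite !L_cons // [br y x]brC.
  have -> : dC (ins y (ins x f)) q = dC (ins x (ins y f)) q.
    by apply: dC_eq => r; rewrite /ins; apply: hs; exact: swap2.
  c2.
rewrite -!/(ins c (dC f) _) !cartan // /fadd.
rewrite (IH (ins c f) (ins_sym c hs)); congr (_ + _).
by apply: L_sym => //; rewrite perm_cat2l; exact: swap2.
Qed.

Lemma dC_sym f : sym f -> sym (dC f).
Proof. by move=> hs; apply: adj_sym => p x y q; exact: dC_adj. Qed.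

Lemma dbl s : forall (F : V -> V -> seq V -> V),
  \sum_(p <- picks s) \sum_(p' <- picks p.2) F p.1 p'.1 p'.2 =
  \sum_(q <- picks2 s) (F q.1.1 q.1.2 q.2 + F q.1.2 q.1.1 q.2).
Proof.
elim: s => [|a s IH] F; first by rewrite !big_nil.
rewrite (sP_cons a s (fun b r => \sum_(p' <- picks r) F b p'.1 p'.2)).
rewrite (sP2_cons a s (fun b c r => F b c r + F c b r)); cbv beta.
rewrite [X in _ + X = _](eq_bigr (fun p => F p.1 a p.2 + \sum_(p' <- picks p.2) F p.1 p'.1 (a :: p'.2))); last first.
  by move=> p _; rewrite (sP_cons a p.2 (F p.1)).
rewrite big_split /= (IH (fun b c r => F b c (a :: r))) big_split /= addrA.
rewrite big_split /=; c2.
Qed.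

Lemma dbl_swap s (F : V -> V -> seq V -> V) :
  \sum_(p <- picks s) \sum_(p' <- picks p.2) F p.1 p'.1 p'.2 =
  \sum_(p <- picks s) \sum_(p' <- picks p.2) F p'.1 p.1 p'.2.
Proof.
rewrite (dbl s F) (dbl s (fun b c r => F c b r)); apply: eq_bigr => q _; exact: addrC.
Qed.

Lemma addz (A B Z : V) : Z = 0 -> A = B + Z -> A = B.
Proof. by move=> -> ->; rewrite addr0. Qed.

Lemma hlin0 f r : hlin f -> f (0 :: r) = 0.
Proof. move=> hl; have := hl 1 0 0 r; rewrite scaler0 addr0 scale1r addvv; exact. Qed.
Lemma hlinD f x y r : hlin f -> f ((x + y) :: r) = f (x :: r) + f (y :: r).
Proof. by move=> hl; have := hl 1 x y r; rewrite !scale1r. Qed.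

Lemma f0_Xg : Xg f0.
Proof. split => //; rewrite /hlin /hder /f0 => *; by rewrite ?scaler0 ?mul0r ?addr0. Qed.

Lemma fadd_Xg f g : Xg f -> Xg g -> Xg (fadd f g).
Proof.
case=> sf lf df af [sg lg dg ag]; split.
- by move=> s t h; rewrite /fadd (sf _ _ h) (sg _ _ h).
- by move=> c x y r; rewrite /fadd lf lg scalerDr; c2.
- by move=> u v r; rewrite /fadd df dg !mulDr; c2.
- by move=> a r; rewrite /fadd af ag addr0.
Qed.

Lemma ins_Xg a f : Xg f -> Xg (ins a f).
Proof.
case=> sf lf df af; split.
- exact: ins_sym.
- move=> c x y r; rewrite /ins !(sf (a :: _ :: r) (_ :: a :: r) (swap2 _ _ _)).
  exact: lf.
- move=> u v r; rewrite /ins !(sf (a :: _ :: r) (_ :: a :: r) (swap2 _ _ _)).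
  exact: df.
- move=> b r; rewrite /ins (sf _ (b :: b :: a :: r)) //.
  by rewrite (perm_catCA [:: a] [:: b; b]).
Qed.

Lemma L_mu a u g s : L a (mu u g) s = mul u (L a g s) + mul (g s) (br a u).
Proof.
rewrite /L /mu leib2 mulDr mul_sumr; c2.
Qed.

Lemma L_cons_eq a b f : sym f -> ins b (L a f) =1 fadd (L a (ins b f)) (ins (br a b) f).
Proof. by move=> hs s; rewrite /ins /fadd L_cons. Qed.

Lemma L_Xg a f : Xg f -> Xg (L a f).
Proof.
move=> hX; have [sf lf df af] := hX; split.
- exact: L_sym.
- move=> c x y r; rewrite !L_cons //.
  rewrite (L_eq _ (ins_lin c x y lf)) L_add L_sc brDr lf [c *: (L _ _ _ + _)]scalerDr; c2.
- move=> u v r; rewrite !L_cons //.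
  have hi : ins (mul u v) f =1 fadd (mu u (ins v f)) (mu v (ins u f)).
    by move=> s; rewrite /ins /fadd /mu df.
  rewrite (L_eq _ hi) L_add !L_mu leib2 hlinD // !df !mulDr.
  rewrite [mul (ins v f r) _]mulC [mul (ins u f r) _]mulC /ins; c2.
- move=> b r; rewrite L_cons // L_cons; last exact: ins_sym.
  rewrite (L_eq _ (fun s => af b s : ins b (ins b f) s = f0 s)) L0 /f0 add0r /ins.
  by rewrite (sf (b :: _ :: r) (_ :: b :: r) (swap2 _ _ _)) addvv.
Qed.

Lemma dC_mu u g s : dC (mu u g) s = mul u (dC g s) + \sum_(p <- picks s) mul (g p.2) (br p.1 u).
Proof.
rewrite /dC /mu mulDr !mul_sumr.
have -> : \sum_(p <- picks s) br p.1 (mul u (g p.2)) =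
   \sum_(p <- picks s) mul u (br p.1 (g p.2)) + \sum_(p <- picks s) mul (g p.2) (br p.1 u).
  by rewrite -big_split; apply: eq_bigr => p _; rewrite leib2.
c2.
Qed.

Lemma L_mul u v f s : hlin f -> hder f ->
  L (mul u v) f s = mul u (L v f s) + mul v (L u f s) +
    \sum_(p <- picks s) (mul (br v p.1) (f (u :: p.2)) + mul (br u p.1) (f (v :: p.2))).
Proof.
move=> hl hd; rewrite /L leib !mulDr !mul_sumr.
have -> : \sum_(p <- picks s) f (br (mul u v) p.1 :: p.2) =
  \sum_(p <- picks s) mul u (f (br v p.1 :: p.2)) + \sum_(p <- picks s) mul v (f (br u p.1 :: p.2))
  + \sum_(p <- picks s) (mul (br v p.1) (f (u :: p.2)) + mul (br u p.1) (f (v :: p.2))).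
  rewrite -!big_split; apply: eq_bigr => p _ /=.
  by rewrite leib hlinD // !hd; c2.
c2.
Qed.

Lemma dC_Xg f : Xg f -> Xg (dC f).
Proof.
move=> hX; have [sf lf df af] := hX; split.
- exact: dC_sym.
- move=> c x y r.
  rewrite -!/(ins _ (dC f) r) !cartan // /fadd.
  rewrite (dC_eq (ins_lin c x y lf)) dC_add dC_sc (L_lina _ _ _ _ lf) [c *: (dC _ _ + _)]scalerDr; c2.
- move=> u v r.
  rewrite -!/(ins _ (dC f) r) !cartan // /fadd.
  have hi : ins (mul u v) f =1 fadd (mu u (ins v f)) (mu v (ins u f)).
    by move=> s; rewrite /ins /fadd /mu df.
  rewrite (dC_eq hi) dC_add !dC_mu L_mul // !mulDr.
  have hz : \sum_(p <- picks r) mul (ins v f p.2) (br p.1 u) +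
     \sum_(p <- picks r) mul (ins u f p.2) (br p.1 v) +
     \sum_(p <- picks r) (mul (br v p.1) (f (u :: p.2)) + mul (br u p.1) (f (v :: p.2))) = 0.
    rewrite -!big_split big1 // => p _ /=.
    rewrite /ins [mul (f (v :: _)) _]mulC [mul (f (u :: _)) _]mulC.
    rewrite [br p.1 u]brC [br p.1 v]brC; c2.
  apply: (addz hz); c2.
- move=> a r.
  rewrite -/(ins a (dC f) (a :: r)) cartan // /fadd.
  rewrite -/(ins a (dC (ins a f)) r) cartan; last exact: ins_sym.
  rewrite /fadd (dC_eq (fun s => af a s : ins a (ins a f) s = f0 s)) dC0 /f0 add0r.
  rewrite L_cons // brxx -/(ins 0 f r) /ins hlin0 // addr0 addvv //.
Qed.

Lemma Lexp a b f s :
  L b (L a f) s = br b (br a (f s)) +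
    \sum_(p <- picks s) (br b (f (br a p.1 :: p.2)) + br a (f (br b p.1 :: p.2))
                          + f (br a (br b p.1) :: p.2)) +
    \sum_(p <- picks s) \sum_(p' <- picks p.2) f (br a p'.1 :: br b p.1 :: p'.2).
Proof.
rewrite {1}/L.
have -> : br b (L a f s) = br b (br a (f s)) + \sum_(p <- picks s) br b (f (br a p.1 :: p.2)).
  by rewrite /L brDr' br_sumr.
have -> : \sum_(p <- picks s) L a f (br b p.1 :: p.2) =
   \sum_(p <- picks s) (br a (f (br b p.1 :: p.2)) + f (br a (br b p.1) :: p.2)) +
   \sum_(p <- picks s) \sum_(p' <- picks p.2) f (br a p'.1 :: br b p.1 :: p'.2).
  rewrite -big_split; apply: eq_bigr => p _ /=.
  rewrite /L (sP_cons (br b p.1) p.2 (fun e r => f (br a e :: r))) /=; c2.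
rewrite -!addrA; congr (_ + _).
rewrite !addrA -big_split /=; congr (_ + _); apply: eq_bigr => p _; c2.
Qed.

Lemma bracket a b f s : Xg f -> L b (L a f) s = L a (L b f) s + L (br a b) f s.
Proof.
move=> hX; have [sf lf df af] := hX.
rewrite !Lexp /L.
have e1 : \sum_(p <- picks s) (br b (f (br a p.1 :: p.2)) + br a (f (br b p.1 :: p.2))
                          + f (br a (br b p.1) :: p.2)) =
   \sum_(p <- picks s) (br a (f (br b p.1 :: p.2)) + br b (f (br a p.1 :: p.2))
                          + f (br b (br a p.1) :: p.2)) +
   \sum_(p <- picks s) f (br (br a b) p.1 :: p.2).
  rewrite -big_split; apply: eq_bigr => p _ /=.
  by rewrite jac2 hlinD //; c2.
have e2 : \sum_(p <- picks s) \sum_(p' <- picks p.2) f (br a p'.1 :: br b p.1 :: p'.2) =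
   \sum_(p <- picks s) \sum_(p' <- picks p.2) f (br b p'.1 :: br a p.1 :: p'.2).
  rewrite (dbl_swap s (fun c e r => f (br a e :: br b c :: r))).
  apply: eq_bigr => p _; apply: eq_bigr => p' _; apply: sf; exact: swap2.
rewrite e1 e2 (jac2 a b (f s)); c2.
Qed.

Lemma comm a f : Xg f -> dC (L a f) =1 L a (dC f).
Proof.
move=> hX s; elim: s f hX => [|b s IH] f hX.
  by rewrite /dC /L /= !big_nil !addr0 br0r.
have sf := Xsym hX.
rewrite -/(ins b (dC (L a f)) s) cartan; last exact: L_sym.
rewrite /fadd (dC_eq (L_cons_eq a b sf)) dC_add (IH (ins b f) (ins_Xg b hX)).
rewrite L_cons; last exact: dC_sym.
rewrite (L_eq a (cartan b sf)) L_add.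
rewrite -/(ins (br a b) (dC f) s) cartan // /fadd.
rewrite (@bracket a b f s hX); c2.
Qed.

Lemma dd0 f : Xg f -> dC (dC f) =1 f0.
Proof.
move=> hX s; elim: s f hX => [|b s IH] f hX.
  by rewrite /dC /f0 /= !big_nil addr0.
have sf := Xsym hX.
rewrite -/(ins b (dC (dC f)) s) cartan; last exact: dC_sym.
rewrite /fadd (dC_eq (cartan b sf)) dC_add (IH _ (ins_Xg b hX)) (comm b hX s) /f0 add0r addvv //.
Qed.

Lemma LL x f s : Xg f -> L x (L x f) s = L (sq x) f s.
Proof.
move=> hX; have [sf lf df af] := hX.
rewrite Lexp /L sqbr.
have -> : \sum_(p <- picks s) \sum_(p' <- picks p.2) f (br x p'.1 :: br x p.1 :: p'.2) = 0.
  rewrite (dbl s (fun c e r => f (br x e :: br x c :: r))) /=.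
  rewrite big1 // => q _; rewrite (sf _ _ (swap2 (br x q.1.2) (br x q.1.1) q.2)) addvv //.
rewrite addr0; congr (_ + _); apply: eq_bigr => p _; rewrite sqbr addvv add0r //.
Qed.

Definition Om' (phi : seq V -> V) (Om : V -> seq V -> V) (x : V) : seq V -> V :=
  fadd (fadd (dC (Om x)) (L x (ins x phi))) (ins (sq x) phi).

Definition RC (phi : seq V -> V) (Om : V -> seq V -> V) : Prop :=
  [/\ Xg phi, forall x, Xg (Om x),
      forall (a : K) x s, Om (a *: x) s = a ^+ 2 *: Om x s,
      forall x y s, Om (x + y) s = Om x s + Om y s + phi (x :: y :: s) &
      forall x y s, Om (mul x y) s = mul (mul x x) (Om y s) + mul (mul y y) (Om x s)
                                     + mul (mul x y) (phi (x :: y :: s))].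

Lemma hlinZ f (c : K) x r : hlin f -> f ((c *: x) :: r) = c *: f (x :: r).
Proof. by move=> hl; have := hl c x 0 r; rewrite addr0 hlin0 // addr0. Qed.

Lemma L_addl f x y s : hlin f -> L (x + y) f s = L x f s + L y f s.
Proof. by move=> hl; have := @L_lina 1 x y f s hl; rewrite !scale1r. Qed.

Lemma L_scl f (c : K) x s : hlin f -> L (c *: x) f s = c *: L x f s.
Proof.
move=> hl; rewrite /L brZl scalerDr scaler_sumr; congr (_ + _).
by apply: eq_bigr => p _; rewrite brZl hlinZ.
Qed.

Lemma mulCA a b c : mul a (mul b c) = mul b (mul a c).
Proof. by rewrite !mulA [mul a b]mulC. Qed.

Lemma om_zero phi Om x s : Xg phi -> (forall y, Xg (Om y)) ->
  dC (Om' phi Om x) s + L x (ins x (dC phi)) s + dC phi (sq x :: s) = 0.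
Proof.
move=> hX hO; have sf := Xsym hX.
rewrite /Om' (@dC_add (fadd (dC (Om x)) (L x (ins x phi))) (ins (sq x) phi)).
rewrite (@dC_add (dC (Om x)) (L x (ins x phi))).
rewrite (dd0 (hO x)) /f0 add0r (comm x (ins_Xg x hX)).
rewrite (L_eq x (cartan x sf)) L_add -/(ins (sq x) (dC phi) s) cartan // /fadd.
rewrite (LL x s hX); c2.
Qed.

Lemma dC_cons2 phi x y s : Xg phi ->
  dC phi (x :: y :: s) = dC (ins y (ins x phi)) s + L y (ins x phi) s + L x (ins y phi) s
                         + phi (br x y :: s).
Proof.
move=> hX; have sf := Xsym hX.
rewrite -/(ins x (dC phi) (y :: s)) cartan // /fadd.
rewrite -/(ins y (dC (ins x phi)) s) cartan; last exact: ins_sym.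
rewrite /fadd L_cons //.
rewrite /ins; c2.
Qed.

Lemma RC_add phi Om x y s : RC phi Om ->
  Om' phi Om (x + y) s = Om' phi Om x s + Om' phi Om y s + dC phi (x :: y :: s).
Proof.
case=> hX hO hZ hD hM; have [sf lf df af] := hX.
rewrite dC_cons2 // /Om' /fadd.
have -> : dC (Om (x + y)) s = dC (Om x) s + dC (Om y) s + dC (ins y (ins x phi)) s.
  have e : Om (x + y) =1 fadd (fadd (Om x) (Om y)) (ins y (ins x phi)).
    by move=> r; rewrite hD /fadd /ins.
  by rewrite (dC_eq e) (@dC_add (fadd (Om x) (Om y))) (@dC_add (Om x) (Om y)).
have e : ins (x + y) phi =1 fadd (ins x phi) (ins y phi) by move=> r; rewrite /ins /fadd hlinD.
rewrite (L_eq _ e) L_add !L_addl; try exact: (Xlin (ins_Xg _ hX)).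
rewrite /ins sqD !hlinD //; c2.
Qed.

Lemma RC_scale phi Om (a : K) x s : RC phi Om ->
  Om' phi Om (a *: x) s = a ^+ 2 *: Om' phi Om x s.
Proof.
case=> hX hO hZ hD hM; have [sf lf df af] := hX.
rewrite /Om' /fadd.
have e : Om (a *: x) =1 fsc (a ^+ 2) (Om x) by move=> r; rewrite hZ.
have e2 : ins (a *: x) phi =1 fsc a (ins x phi) by move=> r; rewrite /ins /fsc hlinZ.
rewrite (dC_eq e) dC_sc (L_eq _ e2) L_sc.
rewrite L_scl; last exact: (Xlin (ins_Xg _ hX)).
rewrite scalerA -expr2 /ins sqZ hlinZ // !scalerDr //.
Qed.

Lemma RC_mul phi Om x y s : RC phi Om ->
  Om' phi Om (mul x y) s = mul (mul x x) (Om' phi Om y s) + mul (mul y y) (Om' phi Om x s)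
                           + mul (mul x y) (dC phi (x :: y :: s)).
Proof.
case=> hX hO hZ hD hM; have [sf lf df af] := hX.
have h1 : dC (Om (mul x y)) s = mul (mul x x) (dC (Om y) s) + mul (mul y y) (dC (Om x) s)
    + mul (mul x y) (dC (ins y (ins x phi)) s)
    + \sum_(p <- picks s) mul (phi (x :: y :: p.2)) (br p.1 (mul x y)).
  have e : Om (mul x y) =1 fadd (fadd (mu (mul x x) (Om y)) (mu (mul y y) (Om x)))
                                (mu (mul x y) (ins y (ins x phi))).
    by move=> r; rewrite hM /fadd /mu /ins.
  rewrite (dC_eq e) (@dC_add (fadd _ _) _) (@dC_add (mu _ _) _) !dC_mu.
  have z1 : forall (g : seq V -> V) u,
      \sum_(p <- picks s) mul (g p.2) (br p.1 (mul u u)) = 0.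
    by move=> g u; rewrite big1 // => p _; rewrite br_xx_mul mul0r.
  by rewrite (z1 (Om y) x) (z1 (Om x) y) !addr0 /ins addrA.
have hg := ins_Xg (mul x y) hX.
have h2 : L (mul x y) (ins (mul x y) phi) s =
    mul (mul x x) (L y (ins y phi) s) + mul (mul y y) (L x (ins x phi) s)
    + mul (mul x y) (L y (ins x phi) s) + mul (mul x y) (L x (ins y phi) s)
    + mul x (mul (phi (y :: s)) (br y x)) + mul y (mul (phi (x :: s)) (br x y))
    + \sum_(p <- picks s) (mul (br y p.1) (mul x (phi (y :: x :: p.2)))
                          + mul (br x p.1) (mul y (phi (x :: y :: p.2)))).
  rewrite L_mul; [|exact: (Xlin hg)|exact: (Xder hg)].
  have e2 : ins (mul x y) phi =1 fadd (mu x (ins y phi)) (mu y (ins x phi)).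
    by move=> r; rewrite /fadd /mu /ins df.
  rewrite !(L_eq _ e2) !L_add !L_mu !brxx ?mul0l ?mul0r !addr0.
  have -> : \sum_(p <- picks s) (mul (br y p.1) (ins (mul x y) phi (x :: p.2))
                   + mul (br x p.1) (ins (mul x y) phi (y :: p.2))) =
            \sum_(p <- picks s) (mul (br y p.1) (mul x (phi (y :: x :: p.2)))
                          + mul (br x p.1) (mul y (phi (x :: y :: p.2)))).
    by apply: eq_bigr => p _; rewrite /ins !df !af !mul0r addr0 add0r.
  move: (L y (ins y phi) s) (L x (ins x phi) s) (L y (ins x phi) s) (L x (ins y phi) s)
    => B1 B2 B3 B4.
  rewrite /ins !mulDr !mulA [mul y x]mulC; c2.
have h3 : ins (sq (mul x y)) phi s =
    mul (mul x x) (phi (sq y :: s)) + mul (mul y y) (phi (sq x :: s))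
    + mul (mul x y) (phi (br x y :: s))
    + mul (br x y) (mul x (phi (y :: s))) + mul (br x y) (mul y (phi (x :: s))).
  rewrite /ins sqM !hlinD // !df !addvv !mul0r !addr0 !mulDr; c2.
have hz1 : mul x (mul (phi (y :: s)) (br y x)) + mul y (mul (phi (x :: s)) (br x y))
    + mul (br x y) (mul x (phi (y :: s))) + mul (br x y) (mul y (phi (x :: s))) = 0.
  rewrite [br y x]brC !(mulCA (br x y)) ![mul (br x y) (phi _)]mulC; c2.
have hz2 : \sum_(p <- picks s) mul (phi (x :: y :: p.2)) (br p.1 (mul x y)) +
    \sum_(p <- picks s) (mul (br y p.1) (mul x (phi (y :: x :: p.2)))
                          + mul (br x p.1) (mul y (phi (x :: y :: p.2)))) = 0.
  rewrite -big_split big1 // => p _ /=.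
  rewrite (sf (y :: x :: p.2) (x :: y :: p.2)) ?swap2 //.
  rewrite leib2 mulDr ![br y p.1]brC ![br x p.1]brC.
  set P := phi (x :: y :: p.2).
  rewrite !(mulCA P) (mulCA (br p.1 y)) (mulCA (br p.1 x)) ![mul (br _ _) P]mulC; c2.
rewrite /Om' /fadd h1 h2 h3 (dC_cons2 x y s hX).
apply: (addz (Z := (mul x (mul (phi (y :: s)) (br y x)) + mul y (mul (phi (x :: s)) (br x y))
    + mul (br x y) (mul x (phi (y :: s))) + mul (br x y) (mul y (phi (x :: s))))
    + (\sum_(p <- picks s) mul (phi (x :: y :: p.2)) (br p.1 (mul x y)) +
    \sum_(p <- picks s) (mul (br y p.1) (mul x (phi (y :: x :: p.2)))
                          + mul (br x p.1) (mul y (phi (x :: y :: p.2))))))).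
  by rewrite hz1 hz2 addr0.
move: (L y (ins y phi) s) (L x (ins x phi) s) (L y (ins x phi) s) (L x (ins y phi) s)
    (dC (Om y) s) (dC (Om x) s) (dC (ins y (ins x phi)) s) => B1 B2 B3 B4 A1 A2 A3.
rewrite /ins !mulDr; c2.
Qed.

Lemma dCE_dC f s : dCE br f s = dC f s.
Proof.
by rewrite /dCE /dC (S2 s (fun b c r => f (br b c :: r))) (S1 s (fun b r => br b (f r))).
Qed.

Lemma deltaE phi om x z : delta br sq phi om x z =
  dC (om x) z + br x (phi (x :: z)) + \sum_(p <- picks z) phi (br x p.1 :: x :: p.2)
  + phi (sq x :: z).
Proof.
rewrite /delta /dC (S2 z (fun b c r => om x (br b c :: r))) (S1 z (fun b r => br b (om x r))).
rewrite (S1 z (fun b r => phi (br x b :: x :: r))); c2.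
Qed.

Lemma picks_size s p : p \in picks s -> (size p.2).+1 = size s.
Proof.
elim: s p => [|a s IH] p //=; rewrite in_cons => /orP [/eqP -> //|].
by case/mapP => p0 /IH h -> /=; rewrite h.
Qed.

Lemma picks2_size s q : q \in picks2 s -> (size q.2).+2 = size s.
Proof.
elim: s q => [|a s IH] q //=; rewrite mem_cat => /orP [] /mapP [p0 hp ->] /=.
  by rewrite (picks_size hp).
by rewrite (IH _ hp).
Qed.

Lemma dC_agree k f g s : (forall t, size t = k -> f t = g t) -> size s = k.+1 ->
  dC f s = dC g s.
Proof.
move=> h hsz; rewrite /dC; congr (_ + _); apply: eq_big_seq => q hq.
  have e := picks2_size hq; rewrite h //= -[k]/(k.+1.-1) -hsz -e //.
have e := picks_size hq; rewrite h // -[k]/(k.+1.-1) -hsz -e //.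
Qed.

Lemma dC_nil f : dC f [::] = 0.
Proof. by rewrite /dC /= !big_nil addr0. Qed.

Lemma isX_agree k f g : (forall s, size s = k -> f s = g s) -> isX mul k g -> isX mul k f.
Proof.
move=> h [hm ha hd]; have hsz : forall (s : seq V) i w, size s = k -> (i < k)%N ->
    size (set_nth 0 s i w) = k.
  by move=> s i w hs hi; rewrite size_set_nth hs; apply/maxn_idPr.
split.
- by move=> s i a u v hs hi; rewrite !h ?hsz //; exact: hm.
- by move=> s i j hs hij hj he; rewrite h //; exact: (ha s i j).
- by move=> s i u v hs hi; rewrite !h ?hsz //; exact: hd.
Qed.

Lemma restr_eq k f s : size s = k -> restr k f s = f s.
Proof. by rewrite /restr => ->; rewrite eqxx. Qed.

Lemma eq0_trans (A B : V) : B = 0 -> A = B -> A = 0.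
Proof. by move=> -> . Qed.

Lemma main_sec n (phi : seq V -> V) (om : V -> seq V -> V) :
  inC mul n (phi, om) ->
  inC mul n.+1 (dPA br sq (phi, om)) /\ cochain_zero n.+2 (dPA br sq (dPA br sq (phi, om))).
Proof.
move=> [hX hom].
pose pt := restr n phi.
pose ot := fun x => if (2 <= n)%N then restr (n - 2) (om x) else f0.
have hpt : Xg pt := isX_Xg hX.
have hot : forall x, Xg (ot x).
  move=> x; rewrite /ot; case: ifP => h2; last exact: f0_Xg.
  by have [_ _ _ hx] := hom h2; exact: isX_Xg.
have hRC : RC pt ot.
  split => //.
  - move=> a x s; rewrite /ot; case: ifP => h2; last by rewrite /f0 scaler0.
    have [hz _ _ _] := hom h2; rewrite /restr; case: eqP => hs; last by rewrite scaler0.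
    exact: hz.
  - move=> x y s; rewrite /ot /pt /restr /=; case: ifP => h2.
      have [_ hd _ _] := hom h2; case: eqP => hs.
        by rewrite hd // ifT //; apply/eqP; lia.
      by rewrite ifF ?addr0 //; apply/eqP; lia.
    by rewrite /f0 ifF ?addr0 //; apply/eqP; lia.
  - move=> x y s; rewrite /ot /pt /restr /=; case: ifP => h2.
      have [_ _ hm _] := hom h2; case: eqP => hs.
        by rewrite hm // ifT //; apply/eqP; lia.
      by rewrite ifF ?mul0r ?addr0 //; apply/eqP; lia.
    by rewrite /f0 ifF ?mul0r ?addr0 //; apply/eqP; lia.
have hpte : forall t, size t = n -> phi t = pt t by move=> t ht; rewrite /pt restr_eq.
have hdE : forall s, size s = n.+1 -> dCE br phi s = dC pt s.
  by move=> s hs; rewrite dCE_dC; apply: (dC_agree hpte).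
have B : forall x z, (1 <= n)%N -> size z = (n - 1)%N ->
    delta br sq phi om x z = Om' pt ot x z.
  move=> x z hn hz; rewrite deltaE /Om' /fadd /L /ins.
  have -> : dC (om x) z = dC (ot x) z.
    rewrite /ot; case: ifP => h2.
      apply: (dC_agree (k := (n - 2)%N)); last by rewrite hz; lia.
      by move=> t ht; rewrite restr_eq.
    have -> : z = [::] by apply/size0nil; rewrite hz; lia.
    by rewrite !dC_nil.
  rewrite hpte /=; last by rewrite hz; lia.
  rewrite hpte /=; last by rewrite hz; lia.
  have -> : \sum_(p <- picks z) phi (br x p.1 :: x :: p.2) =
            \sum_(p <- picks z) pt (x :: br x p.1 :: p.2).
    apply: eq_big_seq => p hp; have e := picks_size hp.
    rewrite hpte /=; last by rewrite e hz; lia.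
    by apply: (Xsym hpt); exact: swap2.
  c2.
have hOX : forall x, Xg (Om' pt ot x).
  move=> x; apply: fadd_Xg; last exact: ins_Xg.
  apply: fadd_Xg; first exact: dC_Xg.
  by apply: L_Xg; exact: ins_Xg.
split.
  rewrite /inC /dPA; split.
    apply: (isX_agree hdE); exact: Xg_isX (dC_Xg hpt).
  move=> h2; have hn : (1 <= n)%N by lia.
  have hsz : forall z : seq V, size z = (n.+1 - 2)%N -> size z = (n - 1)%N by move=> z; lia.
  split.
  - by move=> a x z /hsz hz; rewrite !B // RC_scale.
  - move=> x y z /hsz hz; rewrite !B // RC_add // hdE //= hz; lia.
  - move=> x y z /hsz hz; rewrite !B // RC_mul // hdE //= hz; lia.
  - move=> x; apply: (isX_agree (g := Om' pt ot x)); last exact: Xg_isX.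
    by move=> s /hsz hs; rewrite B.
rewrite /cochain_zero /dPA; split.
  move=> s hs; rewrite dCE_dC (dC_agree hdE) //.
  exact: (dd0 hpt s).
move=> _ x z hz; have hz' : size z = n by move: hz; rewrite subSS subSS subn0.
rewrite deltaE.
apply: (eq0_trans (om_zero x z hpt hot)).
have -> : dC (delta br sq phi om x) z = dC (Om' pt ot x) z.
  case: (posnP n) => hn.
    have -> : z = [::] by apply/size0nil; rewrite hz' hn.
    by rewrite !dC_nil.
  apply: (dC_agree (k := (n - 1)%N)); last by rewrite hz'; lia.
  by move=> t ht; rewrite B //; lia.
rewrite (hdE (x :: z)); last by rewrite /= hz'.
rewrite (hdE (sq x :: z)); last by rewrite /= hz'.
have -> : \sum_(p <- picks z) dCE br phi (br x p.1 :: x :: p.2) =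
          \sum_(p <- picks z) dC pt (x :: br x p.1 :: p.2).
  apply: eq_big_seq => p hp; have e := picks_size hp.
  rewrite hdE /=; last by rewrite e hz'.
  by apply: (dC_sym (Xsym hpt)); exact: swap2.
rewrite /L /ins; c2.
Qed.

End Main.

Unset Implicit Arguments.

Theorem mainTheorem4 (K : fieldType) (hK : 2%N \in [pchar K]) (V : lmodType K)
  (mul br : V -> V -> V) (sq : V -> V) (hA : is_rpa mul br sq)
  (n : nat) (c : cochain V) (hc : inC mul n c) :
  inC mul n.+1 (dPA br sq c) /\ cochain_zero n.+2 (dPA br sq (dPA br sq c)).
Proof.
case: hA => [[mDl mC mA] [bDl bDr bxx bj] lb [sZ sb sD sM]].
case: c hc => phi om hc.
by apply: (main_sec (pcharf0 hK)) => //.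
Qed.
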